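(* As $n\to\infty$, $$E_Y(\Phi_n)=n^2+(1-2\gamma)n-2n\ln n+o(n),$$ where $\gamma$ is the Euler–Mascheroni constant.
   Context: $\mathcal{BT}_n$ is the set of binary phylogenetic trees with leaves bijectively labeled by $\{1,\dots,n\}$ (rooted, every internal node with exactly two children). For $T\in\mathcal{BT}_n$, $\Phi(T)=\sum_{1\le i<j\le n}\delta_T(LCA_T(i,j))$, where $\delta_T$ is depth (arcs from the root) and $LCA$ is lowest common ancestor; $\Phi_n$ is $\Phi(T)$ for random $T\in\mathcal{BT}_n$. Under the Yule model $T$ has probability $P_Y(T)=\frac{2^{n-1}}{n!}\prod_{v\in V_{int}(T)}\frac{1}{\kappa_T(v)-1}$, with $V_{int}(T)$ the internal nodes and $\kappa_T(v)$ the number of leaves below $v$; $E_Y$ is expectation under it. *)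

(* Defs.v *)
From Stdlib Require Import Reals Lra Lia Arith Bool List Permutation.
Import ListNotations.
Open Scope R_scope.

(* Rooted binary trees with leaves labelled by naturals; children are ordered
   in this datatype, the unordered (phylogenetic) tree is represented by its
   canonical form, see [canonical]. *)
Inductive tree : Type :=
| Leaf : nat -> tree
| Node : tree -> tree -> tree.

Fixpoint leaves (t : tree) : list nat :=
  match t with
  | Leaf k => [k]
  | Node l r => leaves l ++ leaves r
  end.

Definition kappa (t : tree) : nat := length (leaves t).

Fixpoint minleaf (t : tree) : nat :=
  match t with
  | Leaf k => k
  | Node l r => Nat.min (minleaf l) (minleaf r)
  end.

(* canonical representative of an unordered tree: at every internal node the
   left child contains the smaller minimal label *)
Fixpoint canonical (t : tree) : Prop :=
  match t with
  | Leaf _ => True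
  | Node l r => (minleaf l < minleaf r)%nat /\ canonical l /\ canonical r
  end.

Definition IsBT (n : nat) (t : tree) : Prop :=
  Permutation (leaves t) (seq 1 n) /\ canonical t.

Definition has_leaf (t : tree) (i : nat) : bool :=
  existsb (Nat.eqb i) (leaves t).

Fixpoint lca_depth (t : tree) (i j : nat) : nat :=
  match t with
  | Leaf _ => 0%nat
  | Node l r =>
      if has_leaf l i && has_leaf l j then S (lca_depth l i j)
      else if has_leaf r i && has_leaf r j then S (lca_depth r i j)
      else 0%nat
  end.

Definition Phi (n : nat) (t : tree) : nat :=
  fold_right Nat.add 0%nat
    (flat_map (fun i => map (fun j => lca_depth t i j) (seq (S i) (n - i)))
              (seq 1 n)).

Fixpoint yule_prod (t : tree) : R :=
  match t with
  | Leaf _ => 1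
  | Node l r => / (INR (kappa t) - 1) * yule_prod l * yule_prod r
  end.

Definition P_Y (n : nat) (t : tree) : R :=
  2 ^ (n - 1) / INR (fact n) * yule_prod t.

(* E_Y(Phi_n), given an exact duplicate-free enumeration [L] of BT_n *)
Definition E_Y_Phi (n : nat) (L : list tree) : R :=
  fold_right Rplus 0 (map (fun t => P_Y n t * INR (Phi n t)) L).

Fixpoint harmonic (n : nat) : R :=
  match n with
  | O => 0
  | S m => harmonic m + / INR (S m)
  end.

(* Main.v *)
Require Import Defs.
From Stdlib Require Import Reals Lra Lia List Permutation Sorted Factorial.
Import ListNotations.
Open Scope R_scope.

Definition sumG {A : Type} (f : A -> R) (L : list A) : R :=
  fold_right Rplus 0 (map f L).

Lemma sumG_nil {A} (f : A -> R) : sumG f [] = 0.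
Proof. reflexivity. Qed.
Lemma sumG_cons {A} (f : A -> R) x L : sumG f (x :: L) = f x + sumG f L.
Proof. reflexivity. Qed.
Lemma sumG_app {A} (f : A -> R) L1 L2 : sumG f (L1 ++ L2) = sumG f L1 + sumG f L2.
Proof. induction L1; simpl. rewrite sumG_nil; lra. rewrite !sumG_cons, IHL1; lra. Qed.
Lemma sumG_map {A B} (f : B -> R) (g : A -> B) L : sumG f (map g L) = sumG (fun x => f (g x)) L.
Proof. unfold sumG; rewrite map_map; reflexivity. Qed.
Lemma sumG_flat_map {A B} (f : B -> R) (g : A -> list B) L :
  sumG f (flat_map g L) = sumG (fun x => sumG f (g x)) L.
Proof. induction L; simpl; [reflexivity|]. rewrite sumG_app, IHL. reflexivity. Qed.
Lemma sumG_ext {A} (f g : A -> R) L : (forall x, In x L -> f x = g x) -> sumG f L = sumG g L.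
Proof. induction L; intros H; [reflexivity|]. rewrite !sumG_cons, H, IHL; [reflexivity| |].
 intros; apply H; simpl; auto. simpl; auto. Qed.
Lemma sumG_perm {A} (f : A -> R) L1 L2 : Permutation L1 L2 -> sumG f L1 = sumG f L2.
Proof. induction 1; rewrite ?sumG_cons; try lra. Qed.
Lemma sumG_scal {A} (f : A -> R) c L : sumG (fun x => c * f x) L = c * sumG f L.
Proof. induction L; rewrite ?sumG_cons, ?sumG_nil; [lra|]. rewrite IHL; lra. Qed.
Lemma sumG_plus {A} (f g : A -> R) L : sumG (fun x => f x + g x) L = sumG f L + sumG g L.
Proof. induction L; rewrite ?sumG_cons, ?sumG_nil; [lra|]. rewrite IHL; lra. Qed.
Lemma sumG_prod {A B C} (f : C -> R) (h : A -> B -> C) L1 L2 :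
  sumG f (map (fun q => h (fst q) (snd q)) (list_prod L1 L2)) =
  sumG (fun a => sumG (fun b => f (h a b)) L2) L1.
Proof. induction L1; simpl; [reflexivity|]. rewrite map_app, sumG_app, IHL1, sumG_cons.
 rewrite map_map, sumG_map. reflexivity. Qed.

Fixpoint sumR (f : nat -> R) (n : nat) : R :=
  match n with O => 0 | S k => sumR f k + f k end.
Lemma sumR_ext f g n : (forall a, (a < n)%nat -> f a = g a) -> sumR f n = sumR g n.
Proof. induction n; intros H; simpl; [reflexivity|]. rewrite IHn, H; auto. Qed.
Lemma sumR_plus f g n : sumR (fun a => f a + g a) n = sumR f n + sumR g n.
Proof. induction n; simpl; [lra|]. rewrite IHn; lra. Qed.
Lemma sumR_scal f c n : sumR (fun a => c * f a) n = c * sumR f n.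
Proof. induction n; simpl; [lra|]. rewrite IHn; lra. Qed.
Lemma sumR_shift f n : sumR f (S n) = f O + sumR (fun a => f (S a)) n.
Proof. induction n; simpl in *; [lra|]. rewrite IHn; lra. Qed.
Lemma sumR_refl f m : sumR f (S m) = sumR (fun a => f (m - a)%nat) (S m).
Proof. induction m.
 - simpl. reflexivity.
 - rewrite sumR_shift with (f := fun a => f (S m - a)%nat).
   change (sumR f (S (S m)) = f (S m - 0)%nat + sumR (fun a => f (m - a)%nat) (S m)).
   rewrite <- IHm. replace (S m - 0)%nat with (S m) by lia. simpl. lra. Qed.

Fixpoint splits (s : list nat) : list (list nat * list nat) :=
  match s with
  | [] => [([], [])]
  | y :: s' => map (fun p => (y :: fst p, snd p)) (splits s')
               ++ map (fun p => (fst p, y :: snd p)) (splits s')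
  end.

Lemma splits_perm s p : In p (splits s) -> Permutation (fst p ++ snd p) s.
Proof. revert p; induction s as [|y s IH]; simpl; intros p H.
 - destruct H as [<-|[]]; simpl; constructor.
 - apply in_app_or in H; destruct H as [H|H]; apply in_map_iff in H;
   destruct H as [q [<- Hq]]; simpl.
   + constructor; auto.
   + apply Permutation_sym, Permutation_cons_app, Permutation_sym; auto. Qed.

Lemma splits_complete s L1 L2 : Permutation (L1 ++ L2) s ->
  exists p, In p (splits s) /\ Permutation L1 (fst p) /\ Permutation L2 (snd p).
Proof. revert L1 L2; induction s as [|y s IH]; simpl; intros L1 L2 H.
 - apply Permutation_sym, Permutation_nil in H. apply app_eq_nil in H as [-> ->].
   exists ([],[]); simpl; auto.
 - assert (Hy : In y (L1 ++ L2)) by (apply (Permutation_in y (Permutation_sym H)); simpl; auto).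
   apply in_app_or in Hy as [Hy|Hy].
   + apply in_split in Hy as [u [v ->]].
     assert (P: Permutation ((u ++ v) ++ L2) s).
     { apply (Permutation_cons_inv (a:=y)). eapply perm_trans; [|exact H].
       rewrite <- !app_assoc; simpl; apply Permutation_middle. }
     destruct (IH _ _ P) as [q [Hq [H1 H2]]].
     exists (y :: fst q, snd q). split; [apply in_or_app; left; apply in_map_iff; eauto|].
     simpl; split; auto. apply Permutation_sym, Permutation_cons_app, Permutation_sym; auto.
   + apply in_split in Hy as [u [v ->]].
     assert (P: Permutation (L1 ++ (u ++ v)) s).
     { apply (Permutation_cons_inv (a:=y)). eapply perm_trans; [|exact H].
       rewrite app_assoc. rewrite (app_assoc L1 u (y::v)). apply Permutation_middle. }
     destruct (IH _ _ P) as [q [Hq [H1 H2]]].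
     exists (fst q, y :: snd q). split; [apply in_or_app; right; apply in_map_iff; eauto|].
     simpl; split; auto. apply Permutation_sym, Permutation_cons_app, Permutation_sym; auto.
Qed.

Lemma splits_incl s p x : In p (splits s) -> (In x (fst p) \/ In x (snd p)) -> In x s.
Proof. intros Hp Hx. apply (Permutation_in x (splits_perm s p Hp)). apply in_or_app; tauto. Qed.

Lemma splits_sorted s p : StronglySorted lt s -> In p (splits s) ->
  StronglySorted lt (fst p) /\ StronglySorted lt (snd p).
Proof. revert p; induction s as [|y s IH]; simpl; intros p Hs H.
 - destruct H as [<-|[]]; simpl; split; constructor.
 - apply StronglySorted_inv in Hs as [Hs Hf].
   apply in_app_or in H; destruct H as [H|H]; apply in_map_iff in H;
   destruct H as [q [<- Hq]]; simpl; destruct (IH q Hs Hq) as [A B]; split; auto;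
   constructor; auto; apply Forall_forall; intros z Hz; rewrite Forall_forall in Hf;
   apply Hf; eapply splits_incl; eauto. Qed.

Lemma splits_nodup s : NoDup s -> NoDup (splits s).
Proof. induction s as [|y s IH]; simpl; intros Hs.
 - constructor; [simpl; tauto| constructor].
 - inversion Hs; subst. apply NoDup_app.
   + apply FinFun.Injective_map_NoDup; auto. intros [a b] [c d] E; simpl in E; congruence.
   + apply FinFun.Injective_map_NoDup; auto. intros [a b] [c d] E; simpl in E; congruence.
   + intros a K1 K2. apply in_map_iff in K1 as [q [<- Hq]]. apply in_map_iff in K2 as [q' [E Hq']].
     destruct q' as [a' b']; simpl in E. injection E; intros _ E2.
     apply H1. apply (splits_incl s (a', b')); auto. left. simpl. rewrite E2. simpl; auto. Qed.

Lemma splits_uniq s p p' : NoDup s -> In p (splits s) -> In p' (splits s) ->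
  Permutation (fst p) (fst p') -> p = p'.
Proof. revert p p'; induction s as [|y s IH]; simpl; intros p p' Hs H H' HP.
 - destruct H as [<-|[]]; destruct H' as [<-|[]]; auto.
 - apply NoDup_cons_iff in Hs as [Hy Hs'].
   apply in_app_or in H; apply in_app_or in H';
   destruct H as [H|H]; apply in_map_iff in H; destruct H as [q [<- Hq]];
   destruct H' as [H'|H']; apply in_map_iff in H'; destruct H' as [q' [<- Hq']]; simpl in HP.
   + apply Permutation_cons_inv in HP. rewrite (IH q q'); auto.
   + exfalso. apply Hy. apply (splits_incl s q' y); auto. left.
     apply (Permutation_in y HP); simpl; auto.
   + exfalso. apply Hy. apply (splits_incl s q y); auto. left.
     apply (Permutation_in y (Permutation_sym HP)); simpl; auto.
   + assert (E := IH q q' Hs' Hq Hq' HP). rewrite E; reflexivity. Qed.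

Lemma minleaf_in t : In (minleaf t) (leaves t).
Proof. induction t; simpl; auto. apply in_or_app.
 destruct (Nat.min_spec (minleaf t1) (minleaf t2)) as [[_ ->]|[_ ->]]; auto. Qed.
Lemma minleaf_le t k : In k (leaves t) -> (minleaf t <= k)%nat.
Proof. induction t; simpl; intros H. destruct H as [<-|[]]; lia.
 apply in_app_or in H as [H|H]; [specialize (IHt1 H)|specialize (IHt2 H)]; lia. Qed.
Lemma leaves_nonnil t : leaves t <> [].
Proof. induction t; simpl; [discriminate|]. intros E; apply app_eq_nil in E; tauto. Qed.

Definition mkNode (q : tree * tree) := Node (fst q) (snd q).

Fixpoint gen (fuel : nat) (S : list nat) : list tree :=
  match fuel with
  | O => []
  | Datatypes.S f =>
    match S with
    | [] => []
    | x :: s =>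
      match s with
      | [] => [Leaf x]
      | _ => flat_map (fun p => match snd p with
                               | [] => []
                               | _ => map mkNode (list_prod (gen f (x :: fst p)) (gen f (snd p)))
                               end) (splits s)
      end
    end
  end.

Lemma perm_single_leaf t x : Permutation (leaves t) [x] -> t = Leaf x.
Proof. intros H. destruct t as [k|l r].
 - simpl in H. apply Permutation_length_1 in H; subst; auto.
 - exfalso. simpl in H. apply Permutation_length in H. rewrite length_app in H.
   destruct (leaves l) eqn:E1; [apply (leaves_nonnil l); auto|].
   destruct (leaves r) eqn:E2; [apply (leaves_nonnil r); auto|]. simpl in H. lia. Qed.

Lemma gen_spec : forall fuel S, StronglySorted lt S -> (length S <= fuel)%nat ->
  forall t, In t (gen fuel S) <-> Permutation (leaves t) S /\ canonical t.
Proof.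
 induction fuel as [|f IH]; intros S HS Hl t.
 - destruct S; simpl in Hl; [|lia]. simpl. split; [tauto|]. intros [H _].
   apply Permutation_sym, Permutation_nil in H. apply (leaves_nonnil t H).
 - destruct S as [|x s].
   + simpl. split; [tauto|]. intros [H _].
     apply Permutation_sym, Permutation_nil in H. apply (leaves_nonnil t H).
   + apply StronglySorted_inv in HS as [Hs Hx]. rewrite Forall_forall in Hx.
     simpl in Hl.
     destruct s as [|y s'].
     * simpl. split.
       -- intros [<-|[]]. simpl. split; auto.
       -- intros [H _]. left. symmetry; apply perm_single_leaf; auto.
     * set (s := y :: s') in *.
       change (In t (flat_map (fun p => match snd p with
                               | [] => []
                               | _ => map mkNode (list_prod (gen f (x :: fst p)) (gen f (snd p)))
                               end) (splits s)) <-> Permutation (leaves t) (x :: s) /\ canonical t).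
       rewrite in_flat_map. split.
       -- intros [p [Hp Ht]].
          destruct (splits_sorted s p Hs Hp) as [HA HB].
          assert (Hlen := Permutation_length (splits_perm s p Hp)). rewrite length_app in Hlen.
          destruct (snd p) as [|b B] eqn:Eb; [destruct Ht|].
          apply in_map_iff in Ht as [[l r] [<- Hq]]. apply in_prod_iff in Hq as [Hl' Hr'].
          assert (SA : StronglySorted lt (x :: fst p)).
          { constructor; auto. apply Forall_forall; intros z Hz; apply Hx.
            eapply splits_incl; eauto. }
          rewrite <- Eb in Hr'.
          apply IH in Hl' as [Pl Cl]; auto; [|rewrite ?Eb; simpl in *; lia].
          apply IH in Hr' as [Pr Cr]; auto; [|rewrite Eb; auto|rewrite ?Eb; simpl in *; lia].
          unfold mkNode; simpl. split.
          ++ apply (perm_trans (Permutation_app Pl Pr)). simpl. constructor. apply splits_perm; auto.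
          ++ refine (conj _ (conj Cl Cr)).
             assert (H1 : (minleaf l <= x)%nat).
             { apply minleaf_le. apply (Permutation_in x (Permutation_sym Pl)); simpl; auto. }
             assert (H2 : In (minleaf r) s).
             { apply (splits_incl s p); auto. right. apply (Permutation_in _ Pr). apply minleaf_in. }
             specialize (Hx _ H2). lia.
       -- intros [P C]. destruct t as [k|l r].
          { exfalso. simpl in P. apply Permutation_length in P. simpl in P. discriminate. }
          simpl in P, C. destruct C as [Cm [Cl Cr]].
          assert (Hge : forall z, In z (leaves l ++ leaves r) -> (x <= z)%nat).
          { intros z Hz. apply (Permutation_in z P) in Hz. destruct Hz as [<-|Hz]; [lia|].
            specialize (Hx _ Hz); lia. }
          assert (Hxl : In x (leaves l)).
          { assert (Hxt : In x (leaves l ++ leaves r)) by (apply (Permutation_in x (Permutation_sym P)); simpl; auto).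
            apply in_app_or in Hxt as [Hxt|Hxt]; auto. exfalso.
            assert (a1 := minleaf_le r x Hxt).
            assert (a2 := Hge (minleaf l) (in_or_app _ _ _ (or_introl (minleaf_in l)))). lia. }
          apply in_split in Hxl as [u [v Euv]].
          assert (P' : Permutation ((u ++ v) ++ leaves r) s).
          { apply (Permutation_cons_inv (a:=x)). eapply perm_trans; [|exact P].
            rewrite Euv. rewrite <- !app_assoc; simpl; apply Permutation_middle. }
          destruct (splits_complete s _ _ P') as [p [Hp [P1 P2]]].
          destruct (splits_sorted s p Hs Hp) as [HA HB].
          assert (Hlen := Permutation_length (splits_perm s p Hp)). rewrite length_app in Hlen.
          exists p. split; auto.
          destruct (snd p) as [|b B] eqn:Eb.
          { apply Permutation_sym, Permutation_nil in P2. apply (leaves_nonnil r P2). }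
          apply in_map_iff. exists (l, r). split; [reflexivity|]. apply in_prod_iff. split.
          ++ apply IH.
             ** constructor; auto. apply Forall_forall; intros z Hz; apply Hx.
                eapply splits_incl; eauto.
             ** simpl in *. lia.
             ** split; auto. rewrite Euv. eapply perm_trans. apply Permutation_sym, Permutation_middle.
                constructor; auto.
          ++ rewrite <- Eb. apply IH; auto.
             ** rewrite Eb; auto.
             ** rewrite Eb; simpl in *; lia.
             ** rewrite Eb; auto.
Qed.

Lemma ss_nodup S : StronglySorted lt S -> NoDup S.
Proof. induction 1; constructor; auto. intros Hin. rewrite Forall_forall in H0.
 specialize (H0 _ Hin); lia. Qed.

Lemma nodup_prod {A B} (L1 : list A) (L2 : list B) : NoDup L1 -> NoDup L2 -> NoDup (list_prod L1 L2).
Proof. induction 1; intros H2; simpl; [constructor|]. apply NoDup_app.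
 - apply FinFun.Injective_map_NoDup; auto. intros a b E; congruence.
 - auto.
 - intros [a b] Ha Hb. apply in_map_iff in Ha as [c [E _]]. injection E; intros; subst.
   apply in_prod_iff in Hb; tauto. Qed.

Lemma nodup_flat_map {A B} (f : A -> list B) L : NoDup L -> (forall x, In x L -> NoDup (f x)) ->
  (forall x y z, In x L -> In y L -> x <> y -> In z (f x) -> In z (f y) -> False) ->
  NoDup (flat_map f L).
Proof. induction 1 as [|a L Ha HL IHL]; intros H1 H2; simpl; [constructor|]. apply NoDup_app.
 - apply H1; simpl; auto.
 - apply IHL; [intros; apply H1; simpl; auto|]. intros x y z Hx Hy Hne Hzx Hzy; apply (H2 x y z); simpl; auto.
 - intros z Hz Hz'. apply in_flat_map in Hz' as [y [Hy Hz']].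
   apply (H2 a y z); simpl; auto. intros ->; auto. Qed.

Lemma gen_nodup : forall fuel S, StronglySorted lt S -> (length S <= fuel)%nat ->
  NoDup (gen fuel S).
Proof.
 induction fuel as [|f IH]; intros S HS Hl; [constructor|].
 destruct S as [|x s]; [constructor|].
 assert (HS' := HS). apply StronglySorted_inv in HS as [Hs Hx]. rewrite Forall_forall in Hx.
 simpl in Hl. destruct s as [|y s']; [repeat constructor; simpl; tauto|].
 set (s := y :: s') in *.
 change (NoDup (flat_map (fun p => match snd p with
                               | [] => []
                               | _ => map mkNode (list_prod (gen f (x :: fst p)) (gen f (snd p)))
                               end) (splits s))).
 assert (SA : forall p, In p (splits s) -> StronglySorted lt (x :: fst p)).
 { intros p Hp. destruct (splits_sorted s p Hs Hp) as [HA HB].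
   constructor; auto. apply Forall_forall; intros z Hz; apply Hx. eapply splits_incl; eauto. }
 apply nodup_flat_map.
 - apply splits_nodup, ss_nodup; auto.
 - intros p Hp. destruct (splits_sorted s p Hs Hp) as [HA HB].
   assert (Hlen := Permutation_length (splits_perm s p Hp)). rewrite length_app in Hlen.
   destruct (snd p) as [|b B] eqn:Eb; [constructor|].
   apply FinFun.Injective_map_NoDup.
   + intros [a1 b1] [a2 b2]; unfold mkNode; simpl; congruence.
   + rewrite <- Eb. apply nodup_prod; apply IH; auto; rewrite ?Eb; auto; simpl in *; lia.
 - intros p p' z Hp Hp' Hne Hz Hz'.
   destruct (snd p) as [|b B] eqn:Eb; [destruct Hz|].
   destruct (snd p') as [|b' B'] eqn:Eb'; [destruct Hz'|].
   apply in_map_iff in Hz as [[l r] [<- Hq]]. apply in_prod_iff in Hq as [Hl1 _].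
   apply in_map_iff in Hz' as [[l' r'] [E Hq']]. apply in_prod_iff in Hq' as [Hl2 _].
   unfold mkNode in E; simpl in E. injection E; intros _ ->.
   assert (Hlen := Permutation_length (splits_perm s p Hp)). rewrite length_app, Eb in Hlen.
   assert (Hlen' := Permutation_length (splits_perm s p' Hp')). rewrite length_app, Eb' in Hlen'.
   apply gen_spec in Hl1 as [P1 _]; [|apply SA; auto| simpl in *; lia].
   apply gen_spec in Hl2 as [P2 _]; [|apply SA; auto| simpl in *; lia].
   apply Hne. apply (splits_uniq s); auto. apply ss_nodup; auto.
   apply (Permutation_cons_inv (a:=x)). eapply perm_trans; [apply Permutation_sym; exact P1|exact P2].
Qed.

Close Scope R_scope.

Definition sumN (f : nat -> nat) (L : list nat) : nat :=
  fold_right (fun x acc => (f x + acc)%nat) 0%nat L.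

Lemma sumN_app f L1 L2 : sumN f (L1 ++ L2) = (sumN f L1 + sumN f L2)%nat.
Proof. induction L1; simpl; auto. rewrite IHL1; lia. Qed.
Lemma sumN_ext f g L : (forall x, In x L -> f x = g x) -> sumN f L = sumN g L.
Proof. induction L; intros H; simpl; auto. f_equal; [apply H; simpl; auto|apply IHL; intros; apply H; simpl; auto]. Qed.
Lemma sumN_perm f L1 L2 : Permutation L1 L2 -> sumN f L1 = sumN f L2.
Proof. induction 1; simpl; lia. Qed.
Lemma sumN_plus f g L : sumN (fun x => f x + g x)%nat L = (sumN f L + sumN g L)%nat.
Proof. induction L; simpl; auto. rewrite IHL; lia. Qed.
Lemma sumN_zero L : sumN (fun _ => 0%nat) L = 0%nat.
Proof. induction L; simpl; auto. Qed.
Lemma sumN_one L : sumN (fun _ => 1%nat) L = length L.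
Proof. induction L; simpl; auto. Qed.

Definition PS (L : list nat) (h : nat -> nat -> nat) : nat :=
  sumN (fun i => sumN (fun j => if Nat.ltb i j then h i j else 0%nat) L) L.

Fixpoint c2 (k : nat) : nat := match k with O => O | S m => (c2 m + m)%nat end.

Fixpoint phn (t : tree) : nat :=
  match t with
  | Leaf _ => 0%nat
  | Node l r => (phn l + phn r + c2 (kappa l) + c2 (kappa r))%nat
  end.

Lemma PS_perm L1 L2 h : Permutation L1 L2 -> PS L1 h = PS L2 h.
Proof. intros P. unfold PS. rewrite (sumN_perm _ _ _ P).
 apply sumN_ext. intros; apply sumN_perm; auto. Qed.

Lemma PS_count L : NoDup L -> PS L (fun _ _ => 1%nat) = c2 (length L).
Proof. unfold PS. induction 1 as [|x L Hx HL IH]; simpl; auto.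
 rewrite Nat.ltb_irrefl. rewrite <- IH.
 assert (E : (sumN (fun j => if Nat.ltb x j then 1 else 0) L +
              sumN (fun i => if Nat.ltb i x then 1 else 0) L = length L)%nat).
 { rewrite <- sumN_plus, <- sumN_one. apply sumN_ext. intros j Hj.
   assert (j <> x) by (intros ->; auto).
   destruct (Nat.ltb_spec x j), (Nat.ltb_spec j x); lia. }
 rewrite <- E. clear E IH.
 assert (E2 : sumN (fun i => ((if Nat.ltb i x then 1 else 0) +
                              sumN (fun j => if Nat.ltb i j then 1 else 0) L))%nat L =
              (sumN (fun i => if Nat.ltb i x then 1 else 0) L +
               sumN (fun i => sumN (fun j => if Nat.ltb i j then 1 else 0) L) L)%nat).
 { apply sumN_plus. }
 rewrite E2. lia. Qed.

Lemma has_leaf_iff t i : has_leaf t i = true <-> In i (leaves t).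
Proof. unfold has_leaf. rewrite existsb_exists. split.
 - intros [x [Hx E]]. apply Nat.eqb_eq in E; subst; auto.
 - intros H; exists i; split; auto. apply Nat.eqb_refl. Qed.
Lemma has_leaf_false t i : ~ In i (leaves t) -> has_leaf t i = false.
Proof. intros H. destruct (has_leaf t i) eqn:E; auto. apply has_leaf_iff in E; tauto. Qed.

Lemma nodup_app_disj {A} (l1 l2 : list A) a : NoDup (l1 ++ l2) -> In a l1 -> In a l2 -> False.
Proof. induction l1 as [|b l1 IH]; simpl; intros H H1 H2; auto.
 apply NoDup_cons_iff in H as [Hb H]. destruct H1 as [->|H1]; eauto.
 apply Hb, in_or_app; auto. Qed.

Lemma Phi_rec t : NoDup (leaves t) -> PS (leaves t) (lca_depth t) = phn t.
Proof. induction t as [k|l IHl r IHr]; intros H.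
 - simpl. unfold PS. simpl. rewrite Nat.ltb_irrefl. reflexivity.
 - simpl in H. simpl leaves. simpl phn.
   assert (Hl := NoDup_app_remove_r _ _ H). assert (Hr := NoDup_app_remove_l _ _ H).
   assert (D : forall a, In a (leaves l) -> In a (leaves r) -> False).
   { intros a; apply nodup_app_disj; auto. }
   set (A := leaves l) in *. set (B := leaves r) in *.
   assert (EA : sumN (fun i => sumN (fun j => if Nat.ltb i j then lca_depth (Node l r) i j else 0%nat) (A++B)) A = (PS A (fun _ _ => 1%nat) + PS A (lca_depth l))%nat).
   { unfold PS. rewrite <- sumN_plus. apply sumN_ext. intros i Hi. rewrite sumN_app, <- sumN_plus.
     rewrite (sumN_ext _ (fun _ => 0%nat) B). rewrite sumN_zero, Nat.add_0_r. apply sumN_ext.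
     - intros j Hj. cbn [lca_depth].
       rewrite (proj2 (has_leaf_iff l i) Hi), (proj2 (has_leaf_iff l j) Hj). simpl.
       destruct (Nat.ltb i j); reflexivity.
     - intros j Hj. cbn [lca_depth].
       rewrite (proj2 (has_leaf_iff l i) Hi), (has_leaf_false l j), (has_leaf_false r i); simpl.
       destruct (Nat.ltb i j); reflexivity. all: intros Hc; eapply D; eauto. }
   assert (EB : sumN (fun i => sumN (fun j => if Nat.ltb i j then lca_depth (Node l r) i j else 0%nat) (A++B)) B = (PS B (fun _ _ => 1%nat) + PS B (lca_depth r))%nat).
   { unfold PS. rewrite <- sumN_plus. apply sumN_ext. intros i Hi. rewrite sumN_app, <- sumN_plus.
     rewrite (sumN_ext _ (fun _ => 0%nat) A). rewrite sumN_zero. simpl. apply sumN_ext.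
     - intros j Hj. cbn [lca_depth].
       rewrite (has_leaf_false l i), (proj2 (has_leaf_iff r i) Hi), (proj2 (has_leaf_iff r j) Hj). simpl.
       destruct (Nat.ltb i j); reflexivity. intros Hc; eapply D; eauto.
     - intros j Hj. cbn [lca_depth].
       rewrite (has_leaf_false l i), (proj2 (has_leaf_iff r i) Hi), (has_leaf_false r j); simpl.
       destruct (Nat.ltb i j); reflexivity. all: intros Hc; eapply D; eauto. }
   unfold PS at 1. rewrite sumN_app, EA, EB, !PS_count, IHl, IHr; auto.
   unfold kappa. fold A. fold B. lia.
Qed.

Lemma Phi_phn n t : Permutation (leaves t) (seq 1 n) -> Phi n t = phn t.
Proof. intros P. rewrite <- Phi_rec by (apply (Permutation_NoDup (Permutation_sym P)), seq_NoDup).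
 rewrite (PS_perm _ _ _ P). unfold Phi, PS.
 assert (G : forall (g : nat -> list nat) L, fold_right Nat.add 0%nat (flat_map g L) =
            sumN (fun i => fold_right Nat.add 0%nat (g i)) L).
 { intros g L; induction L; simpl; auto. rewrite fold_right_app. rewrite <- IHL.
   generalize (fold_right Nat.add 0%nat (flat_map g L)). induction (g a) as [|z w IHw]; simpl; intros; auto.
   rewrite IHw; lia. }
 rewrite G. apply sumN_ext. intros i Hi. apply in_seq in Hi.
 assert (M : forall (h : nat -> nat) L, fold_right Nat.add 0%nat (map h L) = sumN h L).
 { intros h L; induction L; simpl; auto. }
 rewrite M. replace (seq 1 n) with (seq 1 i ++ seq (1 + i) (n - i))
   by (rewrite <- seq_app; f_equal; lia).
 rewrite sumN_app. rewrite (sumN_ext _ (fun _ => 0%nat) (seq 1 i)), sumN_zero; simpl.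
 - apply sumN_ext. intros j Hj. apply in_seq in Hj. destruct (Nat.ltb_spec i j); auto; lia.
 - intros j Hj. apply in_seq in Hj. destruct (Nat.ltb_spec i j); auto; lia.
Qed.

Open Scope R_scope.

Lemma lemU : forall s (chi : nat -> nat -> R),
  sumG (fun p => INR (fact (length (fst p))) * INR (fact (length (snd p))) *
                 chi (length (fst p)) (length (snd p))) (splits s)
  = INR (fact (length s)) * sumR (fun a => chi a (length s - a)%nat) (S (length s)).
Proof.
 induction s as [|y s IH]; intros chi.
 - simpl. rewrite sumG_cons, sumG_nil. simpl. lra.
 - simpl splits. rewrite sumG_app, !sumG_map. simpl fst; simpl snd.
   set (m := length s). simpl length. fold m.
   rewrite (sumG_ext _ (fun p => INR (fact (length (fst p))) * INR (fact (length (snd p))) *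
      (fun a b => INR (S a) * chi (S a) b) (length (fst p)) (length (snd p)))).
   2:{ intros p _. simpl length. rewrite fact_simpl, mult_INR. ring. }
   rewrite (sumG_ext (fun x => INR (fact (length (fst x))) * INR (fact (S (length (snd x)))) * chi (length (fst x)) (S (length (snd x))))
      (fun p => INR (fact (length (fst p))) * INR (fact (length (snd p))) *
      (fun a b => INR (S b) * chi a (S b)) (length (fst p)) (length (snd p)))).
   2:{ intros p _. simpl length. rewrite fact_simpl, mult_INR. ring. }
   rewrite (IH (fun a b => INR (S a) * chi (S a) b)), (IH (fun a b => INR (S b) * chi a (S b))). fold m. rewrite fact_simpl, mult_INR.
   set (T := fun a => chi a (S m - a)%nat).
   assert (E1 : sumR (fun a => INR (S a) * chi (S a) (m - a)%nat) (S m) =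
                sumR (fun a => INR a * T a) (S (S m))).
   { rewrite (sumR_shift (fun a => INR a * T a)). simpl INR at 1. unfold T. simpl. lra. }
   assert (E2 : sumR (fun a => INR (S (m - a)) * chi a (S (m - a))) (S m) =
                sumR (fun a => (INR (S m) - INR a) * T a) (S (S m))).
   { change (sumR (fun a => (INR (S m) - INR a) * T a) (S (S m))) with
        (sumR (fun a => (INR (S m) - INR a) * T a) (S m) + (INR (S m) - INR (S m)) * T (S m)).
     rewrite Rminus_diag, Rmult_0_l, Rplus_0_r. apply sumR_ext. intros a Ha.
     unfold T. replace (S m - a)%nat with (S (m - a)) by lia.
     rewrite S_INR, minus_INR by lia. rewrite S_INR. ring. }
   rewrite E1, E2, <- Rmult_plus_distr_l, <- sumR_plus.
   rewrite (sumR_ext _ (fun a => INR (S m) * T a)) by (intros; ring).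
   rewrite sumR_scal. unfold T. ring.
Qed.

Lemma sum_id m : sumR (fun a => INR (S a)) m = INR m * (INR m + 1) / 2.
Proof. induction m; cbn [sumR]. simpl; lra. rewrite IHm, !S_INR. lra. Qed.

Lemma c2_INR k : INR (c2 k) = INR k * (INR k - 1) / 2.
Proof. induction k; cbn [c2]. simpl; lra. rewrite plus_INR, IHk, S_INR. lra. Qed.

Definition Zf (n : nat) : R := INR (fact n) / 2 ^ (n - 1).
Definition ef (n : nat) : R := INR n * (INR n + 1) - 2 * INR n * harmonic n.
Definition Ev (k : nat) : R := ef k + INR (c2 k).

Lemma sumEv m : sumR (fun a => Ev (S a)) m = INR m * ef (S m) / 2.
Proof. induction m; cbn [sumR]. simpl; lra. rewrite IHm. unfold Ev, ef.
 rewrite c2_INR. change (harmonic (S (S m))) with (harmonic (S m) + / INR (S (S m))).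
 rewrite !S_INR. assert (0 <= INR m) by apply pos_INR. field. lra. Qed.

Lemma sumG_prod3 {A} (f1 g1 f2 g2 : A -> R) c k L1 L2 :
  sumG (fun l => sumG (fun r => c * f1 l * f2 r * (g1 l + g2 r + k)) L2) L1 =
  c * (sumG (fun l => f1 l * g1 l) L1 * sumG f2 L2 + sumG f1 L1 * sumG (fun r => f2 r * g2 r) L2
       + k * sumG f1 L1 * sumG f2 L2).
Proof.
 assert (In1 : forall a b, sumG (fun r => c * a * f2 r * (b + g2 r + k)) L2 =
    c * a * (b * sumG f2 L2 + sumG (fun r => f2 r * g2 r) L2 + k * sumG f2 L2)).
 { intros a b. induction L2; rewrite ?sumG_cons, ?sumG_nil; [ring|]. rewrite IHL2. ring. }
 induction L1; rewrite ?sumG_cons, ?sumG_nil; [ring|]. rewrite In1, IHL1. ring. Qed.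

Lemma sumG_prod2 {A} (f1 f2 : A -> R) c L1 L2 :
  sumG (fun l => sumG (fun r => c * f1 l * f2 r) L2) L1 = c * sumG f1 L1 * sumG f2 L2.
Proof.
 rewrite (sumG_ext _ (fun l => sumG (fun r => c * f1 l * f2 r * (0 + 0 + 1)) L2)).
 - rewrite (sumG_prod3 f1 (fun _ => 0) f2 (fun _ => 0)).
   rewrite (sumG_ext (fun l => f1 l * 0) (fun _ => 0 * 0)) by (intros; ring).
   rewrite (sumG_ext (fun l => f2 l * 0) (fun _ => 0 * 0)) by (intros; ring).
   rewrite !sumG_scal. ring.
 - intros; apply sumG_ext; intros; ring. Qed.

Lemma sumR_S f n : sumR f (Datatypes.S n) = sumR f n + f n.
Proof. reflexivity. Qed.

Lemma gen_sums : forall fuel S, StronglySorted lt S -> S <> [] -> (length S <= fuel)%nat ->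
  sumG yule_prod (gen fuel S) = Zf (length S) /\
  sumG (fun t => yule_prod t * INR (phn t)) (gen fuel S) = Zf (length S) * ef (length S).
Proof.
 induction fuel as [|f IH]; intros S HS Hne Hl.
 { destruct S; [congruence|simpl in Hl; lia]. }
 destruct S as [|x s]; [congruence|].
 assert (HS' := HS). apply StronglySorted_inv in HS as [Hs Hx]. rewrite Forall_forall in Hx.
 simpl in Hl. destruct s as [|y s'].
 { simpl. rewrite !sumG_cons, !sumG_nil. unfold Zf, ef. simpl. split; field. }
 set (s := y :: s') in *.
 change (gen (Datatypes.S f) (x :: s)) with (flat_map (fun p => match snd p with
                               | [] => []
                               | _ => map mkNode (list_prod (gen f (x :: fst p)) (gen f (snd p)))
                               end) (splits s)).
 set (m' := length s').
 assert (Hm : length s = Datatypes.S m') by reflexivity.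
 assert (SA : forall p, In p (splits s) -> StronglySorted lt (x :: fst p)).
 { intros p Hp. destruct (splits_sorted s p Hs Hp) as [HA HB].
   constructor; auto. apply Forall_forall; intros z Hz; apply Hx. eapply splits_incl; eauto. }
 set (c := / (INR (length s) * 2 ^ m')).
 assert (PER : forall p, In p (splits s) ->
   sumG yule_prod (match snd p with [] => [] | _ => map mkNode (list_prod (gen f (x :: fst p)) (gen f (snd p))) end)
   = INR (fact (length (fst p))) * INR (fact (length (snd p))) *
     (if Nat.eqb (length (snd p)) 0 then 0 else INR (Datatypes.S (length (fst p))) * c)
   /\
   sumG (fun t => yule_prod t * INR (phn t)) (match snd p with [] => [] | _ => map mkNode (list_prod (gen f (x :: fst p)) (gen f (snd p))) end)
   = INR (fact (length (fst p))) * INR (fact (length (snd p))) *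
     (if Nat.eqb (length (snd p)) 0 then 0 else INR (Datatypes.S (length (fst p))) * c
       * (Ev (Datatypes.S (length (fst p))) + Ev (length (snd p))))).
 { intros p Hp. destruct (splits_sorted s p Hs Hp) as [HA HB].
   assert (Hlen := Permutation_length (splits_perm s p Hp)). rewrite length_app in Hlen.
   destruct (snd p) as [|b B] eqn:Eb.
   { split; simpl; rewrite ?sumG_nil; unfold sumG; simpl; ring. }
   rewrite <- Eb. set (a := length (fst p)) in *. set (bb := length (snd p)).
   assert (Hbb : bb <> 0%nat) by (unfold bb; rewrite Eb; simpl; lia).
   assert (Hb1 : snd p <> []) by (rewrite Eb; discriminate).
   assert (Hbf : (length (snd p) <= f)%nat) by (rewrite Eb in *; simpl in *; lia).
   assert (Haf : (length (x :: fst p) <= f)%nat) by (rewrite Eb in *; simpl in *; lia).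
   replace (Nat.eqb bb 0) with false by (symmetry; apply Nat.eqb_neq; auto).
   destruct (IH _ (SA p Hp) ltac:(discriminate) Haf) as [Z1 F1].
   rewrite <- Eb in HB. destruct (IH _ HB Hb1 Hbf) as [Z2 F2].
   simpl length in Z1, F1.
   assert (KL : forall l, In l (gen f (x :: fst p)) -> kappa l = Datatypes.S a).
   { intros l Hl'. apply gen_spec in Hl' as [P _]; auto. unfold kappa.
     rewrite (Permutation_length P). reflexivity. }
   assert (KR : forall r, In r (gen f (snd p)) -> kappa r = bb).
   { intros r Hr'. apply gen_spec in Hr' as [P _]; auto. unfold kappa.
     rewrite (Permutation_length P). reflexivity. }
   assert (KN : forall l r, In l (gen f (x :: fst p)) -> In r (gen f (snd p)) ->
             INR (kappa (Node l r)) - 1 = INR (length s)).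
   { intros l r Hl' Hr'. unfold kappa; cbn [leaves]. rewrite length_app.
     fold (kappa l) (kappa r). rewrite KL, KR by auto. rewrite <- Hlen.
     unfold bb; rewrite Eb. replace (length (b::B)) with (Datatypes.S (length B)) by reflexivity.
     rewrite !plus_INR, !S_INR. ring. }
   assert (Hab : (a + bb = length s)%nat) by (unfold bb; rewrite Eb; exact Hlen).
   rewrite Hm in Hab.
   assert (Hs0 : INR (length s) <> 0) by (rewrite Hm; apply not_0_INR; discriminate).
   unfold mkNode. rewrite !sumG_prod. simpl fst; simpl snd. split.
   - rewrite (sumG_ext _ (fun l => sumG (fun r => / INR (length s) * yule_prod l * yule_prod r) (gen f (snd p)))).
     2:{ intros l Hl'. apply sumG_ext. intros r Hr'. simpl yule_prod. rewrite KN by auto. reflexivity. }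
     rewrite sumG_prod2, Z1, Z2. unfold Zf. fold a bb. replace (Datatypes.S a - 1)%nat with a by lia.
     unfold c. rewrite fact_simpl, mult_INR.
     replace (2 ^ m') with (2 ^ a * 2 ^ (bb - 1)).
     2:{ rewrite <- pow_add. f_equal. lia. }
     field. split; [|split]; auto; apply pow_nonzero; lra.
   - rewrite (sumG_ext _ (fun l => sumG (fun r => / INR (length s) * yule_prod l * yule_prod r *
        (INR (phn l) + INR (phn r) + (INR (c2 (Datatypes.S a)) + INR (c2 bb)))) (gen f (snd p)))).
     2:{ intros l Hl'. apply sumG_ext. intros r Hr'. simpl yule_prod. rewrite KN by auto.
         simpl phn. rewrite KL, KR by auto. rewrite !plus_INR. ring. }
     rewrite sumG_prod3, Z1, Z2, F1, F2. unfold Zf, Ev. fold a bb. replace (Datatypes.S a - 1)%nat with a by lia.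
     unfold c. rewrite fact_simpl, mult_INR.
     replace (2 ^ m') with (2 ^ a * 2 ^ (bb - 1)).
     2:{ rewrite <- pow_add. f_equal. lia. }
     field. split; [|split]; auto; apply pow_nonzero; lra. }
 assert (Hc0 : INR (Datatypes.S m') <> 0) by (apply not_0_INR; discriminate).
 assert (Hp0 : 2 ^ m' <> 0) by (apply pow_nonzero; lra).
 split.
 - rewrite sumG_flat_map, (sumG_ext _ _ _ (fun p Hp => proj1 (PER p Hp))).
   rewrite (lemU s (fun a b => if Nat.eqb b 0 then 0 else INR (Datatypes.S a) * c)).
   rewrite Hm, sumR_S. rewrite Nat.sub_diag. simpl (Nat.eqb 0 0).
   rewrite (sumR_ext _ (fun a => c * INR (Datatypes.S a))).
   2:{ intros a Ha. replace (Nat.eqb (Datatypes.S m' - a) 0) with false by (symmetry; apply Nat.eqb_neq; lia). ring. }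
   rewrite sumR_scal, sum_id. unfold Zf, c. rewrite Hm.
   replace (length (x :: s)) with (Datatypes.S (Datatypes.S m')) by reflexivity.
   replace (Datatypes.S (Datatypes.S m') - 1)%nat with (Datatypes.S m') by lia.
   rewrite (fact_simpl (Datatypes.S m')), mult_INR. simpl pow. rewrite !S_INR.
   field. split; auto. rewrite <- S_INR; auto.
 - rewrite sumG_flat_map, (sumG_ext _ _ _ (fun p Hp => proj2 (PER p Hp))).
   rewrite (lemU s (fun a b => if Nat.eqb b 0 then 0 else INR (Datatypes.S a) * c * (Ev (Datatypes.S a) + Ev b))).
   rewrite Hm, sumR_S. rewrite Nat.sub_diag. simpl (Nat.eqb 0 0).
   rewrite (sumR_ext _ (fun a => c * (INR (Datatypes.S a) * Ev (Datatypes.S a)) + c * (INR (Datatypes.S a) * Ev (Datatypes.S m' - a)%nat))).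
   2:{ intros a Ha. replace (Nat.eqb (Datatypes.S m' - a) 0) with false by (symmetry; apply Nat.eqb_neq; lia). ring. }
   rewrite sumR_plus, !sumR_scal.
   rewrite (sumR_refl (fun a => INR (Datatypes.S a) * Ev (Datatypes.S m' - a)%nat) m'). cbv beta.
   rewrite (sumR_ext (fun a => INR (Datatypes.S (m' - a)) * Ev (Datatypes.S m' - (m' - a))%nat) (fun a => (INR (Datatypes.S m') - INR a) * Ev (Datatypes.S a))).
   2:{ intros a Ha. replace (Datatypes.S m' - (m' - a))%nat with (Datatypes.S a) by lia.
       rewrite S_INR, minus_INR by lia. rewrite S_INR; ring. }
   rewrite <- Rmult_plus_distr_l, <- sumR_plus.
   rewrite (sumR_ext _ (fun a => (INR (Datatypes.S m') + 1) * Ev (Datatypes.S a))) by (intros; rewrite S_INR; ring).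
   rewrite sumR_scal, sumEv. unfold Zf, c. rewrite Hm.
   replace (length (x :: s)) with (Datatypes.S (Datatypes.S m')) by reflexivity.
   replace (Datatypes.S (Datatypes.S m') - 1)%nat with (Datatypes.S m') by lia.
   rewrite (fact_simpl (Datatypes.S m')), mult_INR. simpl pow. rewrite (S_INR (Datatypes.S m')).
   field. auto.
Qed.

Lemma seq_ss a n : StronglySorted lt (seq a n).
Proof. revert a; induction n; intros a; simpl; constructor; auto.
 apply Forall_forall; intros z Hz; apply in_seq in Hz; lia. Qed.

Lemma E_exact (enum : nat -> list tree) n :
  (forall n, NoDup (enum n) /\ (forall t, In t (enum n) <-> IsBT n t)) ->
  (1 <= n)%nat -> E_Y_Phi n (enum n) = ef n.
Proof.
 intros H Hn. destruct (H n) as [ND Hin].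
 assert (SS := seq_ss 1 n). assert (Hl : (length (seq 1 n) <= n)%nat) by (rewrite length_seq; lia).
 assert (P : Permutation (enum n) (gen n (seq 1 n))).
 { apply NoDup_Permutation; auto. apply gen_nodup; auto.
   intros t. rewrite Hin, gen_spec by auto. unfold IsBT; tauto. }
 change (E_Y_Phi n (enum n)) with (sumG (fun t => P_Y n t * INR (Phi n t)) (enum n)).
 rewrite (sumG_perm _ _ _ P).
 rewrite (sumG_ext _ (fun t => (2 ^ (n - 1) / INR (fact n)) * (yule_prod t * INR (phn t)))).
 2:{ intros t Ht. apply gen_spec in Ht as [Pt _]; auto. rewrite Phi_phn by auto. unfold P_Y. ring. }
 rewrite sumG_scal. destruct (gen_sums n (seq 1 n) SS) as [_ F]; auto.
 { destruct n; [lia|discriminate]. }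
 rewrite F, length_seq. unfold Zf. field. split; [apply pow_nonzero; lra| apply INR_fact_neq_0].
Qed.

Theorem mainTheorem15 :
  forall (enum : nat -> list tree),
    (forall n, NoDup (enum n) /\ (forall t, In t (enum n) <-> IsBT n t)) ->
  forall gamma : R,
    Un_cv (fun n => harmonic n - ln (INR n)) gamma ->
    Un_cv (fun n =>
             (E_Y_Phi n (enum n)
              - (INR n ^ 2 + (1 - 2 * gamma) * INR n - 2 * INR n * ln (INR n)))
             / INR n) 0.
Proof.
 intros enum H gamma Hg eps Heps.
 destruct (Hg (eps / 2)) as [N HN]; [lra|].
 exists (Nat.max N 1). intros n Hn.
 specialize (HN n ltac:(lia)). unfold R_dist in *.
 rewrite E_exact by (auto; lia). unfold ef.
 assert (Hpos : 0 < INR n) by (apply lt_0_INR; lia).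
 replace ((INR n * (INR n + 1) - 2 * INR n * harmonic n -
     (INR n ^ 2 + (1 - 2 * gamma) * INR n - 2 * INR n * ln (INR n))) / INR n - 0)
   with (-2 * (harmonic n - ln (INR n) - gamma)) by (field; lra).
 rewrite Rabs_mult. replace (Rabs (-2)) with 2 by (rewrite Rabs_left; lra). lra.
Qed.
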